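(* Let $q$ be odd, let $n\ge3$ and $1\le b\le n-2$, and let $C_1,C_2$ be $[n,n-1]_q$-linear codes that are both $b$-symbol MDS codes. Suppose there exist $\mathbf{x}=(x_1,\dots,x_n)\in C_1\cap C_2$ and a hole $H\in\mathbb{H}(\chi_1(\mathbf{x}))$ such that $w_b(\mathbf{x})=d_b(C_1)$, $|H|\ge b-1$, and $\{1,n\}\cap H\ne\emptyset$. Then the $[2n,2n-2]_q$-linear code $C=\{[\mathbf{u}+\mathbf{v},\mathbf{u}-\mathbf{v}]:\mathbf{u}\in C_1,\mathbf{v}\in C_2\}$ is a $b$-symbol AMDS code, i.e., $d_b(C)=b+1$.
   Context: For $\mathbf{x}\in\mathbb{F}_q^L$ and $1\le b\le L$, $\chi_b(\mathbf{x})=\{i:(x_i,\dots,x_{i+b-1})\ne\mathbf{0}\}$ (indices mod $L$), $w_b(\mathbf{x})=|\chi_b(\mathbf{x})|$, $d_b(C)=\min_{\mathbf{0}\ne\mathbf{c}\in C}w_b(\mathbf{c})$; $\chi_1$ is the Hamming support. For $J\subseteq\{1,\dots,n\}$, a hole of $J$ of size $h\ge1$ is a set $\{a+1,\dots,a+h\}$ disjoint from $J$ (indices mod $n$) with $a,a+h+1\in J$; $\mathbb{H}(J)$ is the set of holes of $J$. An $[n,k]_q$-linear code $C$ is $b$-symbol MDS if $d_b(C)=\min\{n-k+b,n\}$ and $b$-symbol AMDS if $d_b(C)=\min\{n-k+b,n\}-1$. *)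

(* Defs.v *)
(* Codes over a finite field F are F-subspaces of row vectors 'rV[F]_L.
   Coordinates are indexed 0..L-1 (paper: 1..L); all definitions are cyclic, so this is a shift. *)
From HB Require Import structures.
From mathcomp Require Import all_boot all_order all_algebra all_field.
Set Implicit Arguments. Unset Strict Implicit. Unset Printing Implicit Defensive.
Import GRing.Theory.
Local Open Scope ring_scope.

Section Codes.
Variable F : finFieldType.

Definition chi_b (L b : nat) (x : 'rV[F]_L) : {set 'I_L} :=
  [set i : 'I_L | [exists j : 'I_L, (j < b)%N &&
      [exists k : 'I_L, (val k == (val i + val j) %% L)%N && (x 0 k != 0)]]].

Definition w_b (L b : nat) (x : 'rV[F]_L) : nat := #|chi_b b x|.

(* minimum b-symbol weight of nonzero codewords (L if the code is zero) *)
Definition d_b (L b : nat) (C : {vspace 'rV[F]_L}) : nat :=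
  \big[minn/L]_(c : 'rV[F]_L | (c \in C) && (c != 0)) w_b b c.

Definition is_hole (L : nat) (J H : {set 'I_L}) : Prop :=
  exists (a : 'I_L) (h : nat), [/\ (1 <= h)%N, a \in J,
    [exists k : 'I_L, (val k == (val a + h + 1) %% L)%N && (k \in J)],
    H = [set i : 'I_L | [exists t : 'I_L, (1 <= val t <= h)%N &&
                                    (val i == (val a + val t) %% L)%N]]
    & [disjoint H & J]].

Definition bsym_MDS (L b : nat) (C : {vspace 'rV[F]_L}) : Prop :=
  d_b b C = minn (L - \dim C + b) L.

Definition bsym_AMDS (L b : nat) (C : {vspace 'rV[F]_L}) : Prop :=
  d_b b C = (minn (L - \dim C + b) L).-1.

(* the set {[u+v, u-v] : u \in C1, v \in C2} and the linear code it spans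
   (it is already a subspace, so the span adds nothing) *)
Definition pm_set (n : nat) (C1 C2 : {vspace 'rV[F]_n}) : {set 'rV[F]_(n + n)} :=
  [set row_mx (u + v) (u - v) | u in C1, v in C2].

Definition pm_code (n : nat) (C1 C2 : {vspace 'rV[F]_n}) : {vspace 'rV[F]_(n + n)} :=
  <<enum (pm_set C1 C2)>>%VS.

End Codes.

(* Main.v *)
Require Import Defs.
From HB Require Import structures.
From mathcomp Require Import all_boot all_order all_algebra all_field.
From mathcomp Require Import zify.
Set Implicit Arguments. Unset Strict Implicit. Unset Printing Implicit Defensive.
Import GRing.Theory.
Lemma bigminn_le (I : finType) (P : pred I) (Fn : I -> nat) (L : nat) (i0 : I) :
  P i0 -> (\big[minn/L]_(i | P i) Fn i <= Fn i0)%N.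
Proof.
move=> h; rewrite -minEnat; exact: (Order.TotalTheory.bigmin_le_cond L Fn h).
Qed.
Lemma bigminn_ge (I : finType) (P : pred I) (Fn : I -> nat) (L k : nat) :
  (k <= L)%N -> (forall i, P i -> k <= Fn i)%N -> (k <= \big[minn/L]_(i | P i) Fn i)%N.
Proof.
move=> hL h; apply: (big_ind (fun m => k <= m)%N) => // m1 m2 h1 h2.
by rewrite leq_min h1 h2.
Qed.

Lemma modL (y L : nat) : (y < 2 * L)%N ->
  ((y < L)%N /\ y %% L = y)%N \/ ((L <= y)%N /\ y %% L = y - L)%N.
Proof.
move=> H; case: (ltnP y L) => Hy.
  by left; split=> //; rewrite modn_small.
right; split=> //.
have -> : y = (y - L) + L by rewrite subnK.
by rewrite modnDr addnK modn_small //; lia.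
Qed.

Ltac mcase y L := let h := fresh "hm" in
  have h := @modL y L ltac:(lia); destruct h as [[? ?]|[? ?]].

Ltac mc y L := let h := fresh "hm" in
  have h := @modL y L ltac:(lia); destruct h as [[? ->]|[? ->]].

Ltac mall L := repeat match goal with |- context [(?y %% L)] =>
  lazymatch y with context [modn] => fail | _ => mc y L end end.

Lemma ar_single L s i j : i < L -> j < L -> s = (i + j) %% L -> i = (s + L - j) %% L.
Proof. move=> hi hj ->; mcase (i + j) L; mcase ((i + j) %% L + L - j) L; lia. Qed.

Lemma ar_inj L s j1 j2 : s < L -> j1 < L -> j2 < L -> (s + L - j1) %% L = (s + L - j2) %% L -> j1 = j2.
Proof. move=> *; mcase (s + L - j1) L; mcase (s + L - j2) L; lia. Qed.

Lemma ar_img L s j : s < L -> j < L -> s = ((s + L - j) %% L + j) %% L.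
Proof. move=> *; mcase (s + L - j) L; mcase ((s + L - j) %% L + j) L; lia. Qed.

Lemma ar_e_in L s b j0 : s < L -> 0 < j0 -> j0 < b -> b < L ->
  (s + L - j0) %% L = ((s + L - b) %% L + (b - j0)) %% L.
Proof. move=> *; mall L; lia. Qed.

Lemma ar_e_out L s b j : s < L -> j < b -> b < L -> (s + L - b) %% L <> (s + L - j) %% L.
Proof. move=> *; mcase (s + L - j) L; mcase (s + L - b) L; lia. Qed.

Lemma ar_j0 L s : s < L -> (s + L - 0) %% L = s.
Proof. by move=> h; rewrite subn0 modnDr modn_small. Qed.

Lemma ar_p1 n i j1 p1 : i < n -> j1 < n -> p1 < n -> p1 = (i + j1) %% (n + n) -> p1 = i + j1.
Proof. move=> *; subst; mcase (i + j1) (n + n); lia. Qed.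

Lemma ar_p2 n i j2 p2 : i < n -> j2 < n -> p2 < n -> p2 = (i + n + j2) %% (n + n) -> p2 + n = i + j2.
Proof. move=> *; subst; mcase (i + n + j2) (n + n); lia. Qed.

Lemma ar_final n b m a t0 i j1 j2 p1 p2 : b < n -> a < n -> b - 1 <= m -> m <= n - 1 ->
  1 <= t0 <= m -> ((a + t0) %% n = 0 \/ (a + t0) %% n = n.-1) ->
  i < n -> j1 < b -> j2 < b -> p1 < n -> p2 < n -> p1 = i + j1 -> p2 + n = i + j2 ->
  ~ (a + 1 <= p1 <= a + m) -> ~ (a + 1 <= p2 + n <= a + m) -> False.
Proof. move=> *; mcase (a + t0) n; lia. Qed.

Lemma ar_map n i j k : i < n + n -> j < n -> k < n -> k = (i + j) %% (n + n) ->
  k = (i %% n + j) %% n.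
Proof. move=> *; subst; mcase i n; mcase (i + j) (n + n); mcase (i %% n + j) n; lia. Qed.

Lemma ar_same n i1 i2 : i1 < n + n -> i2 < n + n -> i1 %% n = i2 %% n -> i1 <> i2 ->
  (i2 = i1 + n /\ i1 < n) \/ (i1 = i2 + n /\ i2 < n).
Proof. move=> *; mcase i1 n; mcase i2 n; lia. Qed.

Local Open Scope ring_scope.

Lemma two_neq0 (F : finFieldType) : odd #|F| -> (2%:R : F) != 0.
Proof.
move=> Hodd; apply/negP => /eqP H2.
have pc : (2%N \in [pchar F]) by apply/andP; split => //; apply/eqP.
have := card_pprimeChar pc.
set k := logn _ _ => Hc.
have Hc' : #|F| = (2 ^ k)%N by exact: Hc.
have H1 : (1 < #|F|)%N.
  by rewrite (cardD1 0) (cardD1 1) !inE (oner_neq0 F).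
move: Hodd H1; rewrite Hc'; case: k {Hc Hc'} => [|k] //=.
by rewrite expnS oddM.
Qed.

Section Comb.
Variable F : finFieldType.

Lemma chiP (L b : nat) (x : 'rV[F]_L) (i : 'I_L) : (b <= L)%N ->
  reflect (exists (j : nat) (k : 'I_L), [/\ (j < b)%N, (val k = (i + j) %% L)%N & x 0 k != 0])
          (i \in chi_b b x).
Proof.
move=> hbL; rewrite inE; apply: (iffP existsP).
  move=> [j /andP [hj /existsP [k /andP [/eqP hk hx]]]].
  by exists (val j), k.
move=> [j [k [hj hk hx]]].
have hjL : (j < L)%N by lia.
exists (Ordinal hjL); rewrite /= hj /=; apply/existsP; exists k.
by rewrite hx hk eqxx.
Qed.

Lemma single_le (L b : nat) (x : 'rV[F]_L) (s : 'I_L) : (b <= L)%N ->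
  (forall k, k != s -> x 0 k = 0) -> (w_b b x <= b)%N.
Proof.
move=> hbL hs.
have L0 : (0 < L)%N by have := ltn_ord s; lia.
pose f (j : 'I_b) : 'I_L := Ordinal (ltn_pmod (s + L - j) L0).
have sub : chi_b b x \subset f @: setT.
apply/subsetP => i /(chiP x i hbL) [j [k [hj hk hx]]].
have ks : k = s.
  by apply/eqP; apply: contraNT hx => /hs ->; rewrite eqxx.
rewrite ks in hk.
apply/imsetP; exists (Ordinal hj); first by rewrite inE.
apply: val_inj => /=.
exact: (ar_single (ltn_ord i) (leq_trans hj hbL) hk).
rewrite /w_b; apply: leq_trans (subset_leq_card sub) _.
by apply: leq_trans (leq_imset_card _ _) _; rewrite cardsT card_ord.
Qed.

Lemma two_ge (L b : nat) (x : 'rV[F]_L) (s t : 'I_L) : (1 <= b)%N -> (b < L)%N ->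
  s != t -> x 0 s != 0 -> x 0 t != 0 -> (b.+1 <= w_b b x)%N.
Proof.
move=> hb1 hbL hst hs ht.
have hbL' : (b <= L)%N by apply: ltnW.
have L0 : (0 < L)%N by have := ltn_ord s; lia.
have st : ((s : nat) <> t)%N by move=> h; move/eqP: hst; apply; apply: val_inj.
have hsL := ltn_ord s; have htL := ltn_ord t.
pose f (j : 'I_b) : 'I_L := Ordinal (ltn_pmod (s + L - j) L0).
have injf : injective f.
  move=> j1 j2 /(congr1 val) /= h; apply: val_inj => /=.
  exact: (ar_inj hsL (leq_trans (ltn_ord j1) hbL') (leq_trans (ltn_ord j2) hbL') h).
have Himg : f @: setT \subset chi_b b x.
  apply/subsetP => i /imsetP [j _ ->]; apply/(chiP x (f j) hbL').
  exists j, s; split => //=.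
  exact: (ar_img hsL (leq_trans (ltn_ord j) hbL')).
have cI : #|f @: setT| = b by rewrite card_imset // cardsT card_ord.
have [e he1 he2] : exists2 e, e \in chi_b b x & e \notin f @: setT.
  case: (boolP (t \in f @: setT)) => htI; last first.
    exists t => //; apply/(chiP x t hbL'); exists 0%N, t; split => //=.
    by rewrite addn0 modn_small.
  case/imsetP: htI => j0 _ htj.
  have htj' : (t : nat) = ((s + L - j0) %% L)%N by rewrite htj.
  have hj0 := ltn_ord j0.
  have j0pos : (0 < j0)%N.
    case: (posnP j0) => // h0; exfalso; apply: st; rewrite htj' h0 subn0 modnDr.
    by rewrite modn_small.
  exists (Ordinal (ltn_pmod (s + L - b) L0)).
    apply/chiP => //; exists (b - j0)%N, t; split => //=; first by lia.
    by rewrite htj' (ar_e_in hsL j0pos hj0 hbL).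
  apply/negP =>  /imsetP [j _ /(congr1 val) /= h].
  exact: (ar_e_out hsL (ltn_ord j) hbL h).
have sub : e |: f @: setT \subset chi_b b x.
  by apply/subsetP => z; rewrite in_setU1 => /orP [/eqP ->|] //; apply/subsetP.
rewrite /w_b; apply: leq_trans (subset_leq_card sub).
by rewrite cardsU1 he2 cI.
Qed.

Lemma noclash (n b m a t0 i j1 j2 : nat) (x : 'rV[F]_n) (p1 p2 : 'I_n) :
  (b < n)%N -> (a < n)%N -> (b - 1 <= m)%N -> (m <= n - 1)%N ->
  (1 <= t0 <= m)%N -> ((a + t0) %% n = 0 \/ (a + t0) %% n = n.-1)%N ->
  (forall (t : nat) (k : 'I_n), (1 <= t <= m)%N -> (val k = (a + t) %% n)%N -> x 0 k = 0) ->
  (i < n)%N -> (j1 < b)%N -> (j2 < b)%N -> x 0 p1 != 0 -> x 0 p2 != 0 ->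
  (p1 : nat) = ((i + j1) %% (n + n))%N -> (p2 : nat) = ((i + n + j2) %% (n + n))%N -> False.
Proof.
move=> hbn han hbm hmn ht0 hy hz hi hj1 hj2 hx1 hx2 e1 e2.
have hp1 := ltn_ord p1; have hp2 := ltn_ord p2.
have E1 := ar_p1 hi (ltn_trans hj1 hbn) hp1 e1.
have E2 := ar_p2 hi (ltn_trans hj2 hbn) hp2 e2.
have Z1 : ~ (a + 1 <= p1 <= a + m)%N.
  move=> hp; move/eqP: hx1; apply; apply: (hz (p1 - a)%N p1); first lia.
  rewrite subnKC ?modn_small //; lia.
have Z2 : ~ (a + 1 <= p2 + n <= a + m)%N.
  move=> hp; move/eqP: hx2; apply; apply: (hz (p2 + n - a)%N p2); first lia.
  rewrite subnKC; last lia.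
  by rewrite modnDr modn_small.
exact: (ar_final hbn han hbm hmn ht0 hy hi hj1 hj2 hp1 hp2 E1 E2 Z1 Z2).
Qed.

Lemma dbl_le (n b m a t0 : nat) (x : 'rV[F]_n) (c : 'rV[F]_(n + n)) :
  (1 <= b)%N -> (b < n)%N -> (a < n)%N -> (b - 1 <= m)%N -> (m <= n - 1)%N ->
  (1 <= t0 <= m)%N -> ((a + t0) %% n = 0 \/ (a + t0) %% n = n.-1)%N ->
  (forall (t : nat) (k : 'I_n), (1 <= t <= m)%N -> (val k = (a + t) %% n)%N -> x 0 k = 0) ->
  (forall k : 'I_(n + n), c 0 k != 0 -> exists2 k' : 'I_n, (k : nat) = k' & x 0 k' != 0) ->
  (w_b b c <= w_b b x)%N.
Proof.
move=> hb1 hbn han hbm hmn ht0 hy hz hcx.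
have n0 : (0 < n)%N by lia.
have hbnn : (b < n + n)%N by lia.
have hb2 : (b <= n + n)%N by lia.
have hb1' : (b <= n)%N by lia.
pose g (i : 'I_(n + n)) : 'I_n := Ordinal (ltn_pmod i n0).
have inj : {in chi_b b c &, injective g}.
  move=> i1 i2 /(chiP c i1 hb2) [j1 [k1 [hj1 hk1 hc1]]]
    /(chiP c i2 hb2) [j2 [k2 [hj2 hk2 hc2]]] /(congr1 val) /= hg.
  case: (eqVneq i1 i2) => // hne; exfalso.
  have hne' : (i1 : nat) <> i2 by move=> h; move/eqP: hne; apply; apply: val_inj.
  have [p1 e1 hx1] := hcx k1 hc1; have [p2 e2 hx2] := hcx k2 hc2.
  case: (ar_same (ltn_ord i1) (ltn_ord i2) hg hne') => [[E hi]|[E hi]].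
    apply: (noclash hbn han hbm hmn ht0 hy hz hi hj1 hj2 hx1 hx2).
      by rewrite -e1 hk1.
    by rewrite -e2 hk2 E.
  apply: (noclash hbn han hbm hmn ht0 hy hz hi hj2 hj1 hx2 hx1).
    by rewrite -e2 hk2.
  by rewrite -e1 hk1 E.
have sub : g @: chi_b b c \subset chi_b b x.
  apply/subsetP => _ /imsetP [i /(chiP c i hb2) [j [k [hj hk hc]]] ->].
  have [p e hx] := hcx k hc.
  apply/(chiP x (g i) hb1'); exists j, p; split => //=.
  rewrite -e; apply: ar_map (ltn_ord i) (ltn_trans hj hbn) _ hk.
  by move: (ltn_ord p); rewrite -e.
by rewrite /w_b -(card_in_imset inj); apply: subset_leq_card.
Qed.

Lemma twice0 (a : F) : (2%:R : F) != 0 -> a + a = 0 -> a = 0.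
Proof.
move=> h2 e; apply/eqP; move: e => /eqP; rewrite -mulr2n -mulr_natl mulf_eq0.
by rewrite (negbTE h2).
Qed.

End Comb.

Unset Implicit Arguments.

Theorem mainTheorem13 (F : finFieldType) (n b : nat)
  (C1 C2 : {vspace 'rV[F]_n}) (x : 'rV[F]_n) (H : {set 'I_n}) :
  odd #|F| -> (3 <= n)%N -> (1 <= b)%N -> (b <= n - 2)%N ->
  \dim C1 = (n - 1)%N -> \dim C2 = (n - 1)%N ->
  bsym_MDS b C1 -> bsym_MDS b C2 ->
  x \in C1 -> x \in C2 ->
  is_hole (chi_b 1 x) H ->
  w_b b x = d_b b C1 ->
  (b - 1 <= #|H|)%N ->
  [exists i in H, (val i == 0)%N || (val i == n.-1)] ->
  \dim (pm_code C1 C2) = (2 * n - 2)%N /\ bsym_AMDS b (pm_code C1 C2)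
  /\ d_b b (pm_code C1 C2) = b.+1.
Proof.
move=> hodd hn3 hb1 hbn hd1 hd2 hM1 hM2 hx1 hx2 hhole hwx hH hex.
have h2 := two_neq0 hodd.
have hbn' : (b < n)%N by clear -hbn hn3; lia.
have n0 : (0 < n)%N by clear -hn3; lia.
have hbnn : (b < n + n)%N by clear -hbn hn3; lia.
have dC1 : d_b b C1 = b.+1.
  rewrite /bsym_MDS in hM1; rewrite hM1 hd1.
  have -> : (n - (n - 1) + b = b.+1)%N by clear -hn3; lia.
  by apply/minn_idPl; clear -hbn hn3; lia.
have wx : w_b b x = b.+1 by rewrite hwx.
pose M1 : 'M[F]_(n, n + n) := row_mx 1%:M 1%:M.
pose M2 : 'M[F]_(n, n + n) := row_mx 1%:M (- 1%:M).
pose f1 : 'Hom('rV[F]_n, 'rV[F]_(n + n)) := linfun (mulmxr M1).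
pose f2 : 'Hom('rV[F]_n, 'rV[F]_(n + n)) := linfun (mulmxr M2).
have f1E (u : 'rV[F]_n) : f1 u = row_mx u u by rewrite lfunE /= mul_mx_row mulmx1.
have f2E (u : 'rV[F]_n) : f2 u = row_mx u (- u) by rewrite lfunE /= mul_mx_row mulmx1 mulmxN mulmx1.
have eqC : pm_code C1 C2 = (f1 @: C1 + f2 @: C2)%VS.
  apply/eqP; rewrite eqEsubv; apply/andP; split.
    apply/span_subvP => w; rewrite mem_enum => /imset2P [u v hu hv ->].
    have -> : row_mx (u + v) (u - v) = f1 u + f2 v by rewrite f1E f2E add_row_mx.
    by apply: memv_add; apply: memv_img.
  apply/subvP => w /memv_addP [w1 /memv_imgP [u hu ->] [w2 /memv_imgP [v hv ->] ->]].
  apply: memv_span; rewrite mem_enum; apply/imset2P; exists u v => //.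
  by rewrite f1E f2E add_row_mx.
have mem_pm c : c \in pm_code C1 C2 ->
    exists u, exists v, [/\ u \in C1, v \in C2 & c = row_mx (u + v) (u - v)].
  rewrite eqC => /memv_addP [w1 /memv_imgP [u hu ->] [w2 /memv_imgP [v hv ->] ->]].
  by exists u, v; split => //; rewrite f1E f2E add_row_mx.
have pm_mem u v : u \in C1 -> v \in C2 -> row_mx (u + v) (u - v) \in pm_code C1 C2.
  move=> hu hv; rewrite eqC.
  have -> : row_mx (u + v) (u - v) = f1 u + f2 v by rewrite f1E f2E add_row_mx.
  by apply: memv_add; apply: memv_img.
have hdim : \dim (pm_code C1 C2) = (2 * n - 2)%N.
  have k1 : lker f1 = 0%VS.
    by apply/eqP/lker0P => u u'; rewrite !f1E => /eq_row_mx [].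
  have k2 : lker f2 = 0%VS.
    by apply/eqP/lker0P => u u'; rewrite !f2E => /eq_row_mx [].
  have dis : (f1 @: C1 :&: f2 @: C2 = 0)%VS.
    apply/eqP; rewrite -subv0; apply/subvP => w /memv_capP
      [/memv_imgP [u _ ->] /memv_imgP [v _ e]].
    rewrite memv0 f1E; move: e; rewrite f1E f2E => /eq_row_mx [-> e2].
    have : v *+ 2 = 0 by rewrite mulr2n {2}e2 subrr.
    rewrite -scaler_nat => /eqP; rewrite scaler_eq0 (negbTE h2) /= => /eqP ->.
    by rewrite row_mx0.
  rewrite eqC dimv_disjoint_sum // !limg_dim_eq ?k1 ?k2 ?capv0 // hd1 hd2; clear -hn3; lia.
have Lb : (b.+1 <= d_b b (pm_code C1 C2))%N.
  apply: bigminn_ge; first by clear -hbn hn3; lia.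
  move=> c /andP [hc hc0].
  have [u [v [hu hv ce]]] := mem_pm c hc.
  have [s hs] : exists s, c 0 s != 0.
    case: (pickP (fun s => c 0 s != 0)) => [s hs|h0]; first by exists s.
    exfalso; move/eqP: hc0; apply; apply/rowP => k; rewrite [RHS]mxE.
    by have := h0 k; rewrite /= => /negbFE/eqP.
  case: (pickP (fun t => (t != s) && (c 0 t != 0))) => [t /andP [hts ht]|hall].
    by apply: (two_ge hb1 hbnn _ hs ht); rewrite eq_sym.
  have hz k : k != s -> c 0 k = 0.
    by move=> hk; have := hall k; rewrite /= hk /= => /negbFE/eqP.
  exfalso.
  suff [w [s' [hw hw0 hws]]] : exists w, exists s' : 'I_n,
      [/\ w \in C1, w != 0 & forall k, k != s' -> w 0 k = 0].
    have := single_le (ltnW hbn') hws.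
    have hdw : (d_b b C1 <= w_b b w)%N by apply: bigminn_le; rewrite hw hw0.
    rewrite dC1 in hdw; clear -hdw; lia.
  rewrite ce in hs hz.
  case: (splitP s) => [s1 es|s2 es].
    have hs1 : s = lshift n s1 by apply: val_inj.
    have huv : u = v.
      apply/eqP; rewrite -subr_eq0; apply/eqP/rowP => k; rewrite [RHS]mxE.
      have e := hz (rshift n k); rewrite hs1 eq_rlshift row_mxEr in e.
      exact: e.
    exists u, s1; split => //.
      apply: contraNneq hs => u0.
      by rewrite hs1 row_mxEl -huv u0 addr0 mxE.
    move=> k hk; have e := hz (lshift n k).
    rewrite hs1 (inj_eq (@lshift_inj _ _)) hk row_mxEl -huv mxE in e.
    by apply: twice0 h2 _; apply: e.
  have hs2 : s = rshift n s2 by apply: val_inj.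
  have huv : v = - u.
    apply/rowP => k; rewrite [RHS]mxE.
    have e := hz (lshift n k); rewrite hs2 eq_lrshift row_mxEl mxE in e.
    by apply/eqP; rewrite -addr_eq0 addrC e.
  exists u, s2; split => //.
    apply: contraNneq hs => u0.
    by rewrite hs2 row_mxEr huv u0 oppr0 subr0 mxE.
  move=> k hk; have e := hz (rshift n k).
  rewrite hs2 (inj_eq (@rshift_inj _ _)) hk row_mxEr huv opprK mxE in e.
  by apply: twice0 h2 _; apply: e.
have Ub : (d_b b (pm_code C1 C2) <= b.+1)%N.
  case: hhole => a [h [h1 ha hk HE hdis]].
  have hb1n : (1 <= n)%N by clear -hn3; lia.
  have chi1 (k : 'I_n) : x 0 k != 0 -> k \in chi_b 1 x.
    move=> hk'; apply/(chiP x k hb1n); exists 0%N, k; split => //=.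
    by rewrite addn0 modn_small.
  have hz t (k : 'I_n) : (1 <= t <= minn h (n - 1))%N -> (val k = (a + t) %% n)%N -> x 0 k = 0.
    move=> ht hk'; apply/eqP; apply: contraT => hk0.
    have htn : (t < n)%N by clear -ht n0; lia.
    have kH : k \in H.
      rewrite HE inE; apply/existsP; exists (Ordinal htn).
      rewrite /= hk' eqxx andbT; apply/andP; split; clear -ht; lia.
    by have := chi1 k hk0; rewrite (disjointFr hdis kH).
  have [i0 hi0 hi0v] : exists2 i0, i0 \in H & (val i0 == 0)%N || (val i0 == n.-1).
    by case/existsP: hex => i /andP [hi hv]; exists i.
  move: hi0; rewrite HE inE => /existsP [t0 /andP [ht0 /eqP et0]].
  have hm1 : (b - 1 <= minn h (n - 1))%N.
    have : (#|H| <= minn h (n - 1))%N.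
      pose g (t : 'I_(minn h (n - 1))) : 'I_n := Ordinal (ltn_pmod (a + t + 1) n0).
      have : H \subset g @: setT.
        apply/subsetP => i; rewrite HE inE => /existsP [t /andP [htt /eqP et]].
        rewrite /= in htt et.
        have htm : (t.-1 < minn h (n - 1))%N by have := ltn_ord t; clear -htt; lia.
        apply/imsetP; exists (Ordinal htm); first by rewrite inE.
        apply: val_inj => /=; rewrite et; congr (_ %% _)%N; clear -htt; lia.
      move/subset_leq_card/leq_trans; apply.
      by apply: leq_trans (leq_imset_card _ _) _; rewrite cardsT card_ord.
    clear -hH; lia.
  pose c0 := row_mx (x + x) (x - x).
  have hc0 : c0 \in pm_code C1 C2 := pm_mem _ _ hx1 hx2.
  have hcx k : c0 0 k != 0 -> exists2 k' : 'I_n, (k : nat) = k' & x 0 k' != 0.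
    case: (splitP k) => [k1 e|k2 e] hc.
      have hk1 : k = lshift n k1 by apply: val_inj.
      rewrite hk1 row_mxEl mxE in hc; exists k1 => //.
      by apply: contraNneq hc => ->; rewrite addr0.
    have hk2 : k = rshift n k2 by apply: val_inj.
    by rewrite hk2 row_mxEr subrr mxE eqxx in hc.
  have c0nz : c0 != 0.
    move/(chiP x a hb1n): ha => [j [k [hj hk' hxk]]].
    apply/eqP => /rowP /(_ (lshift n k)); rewrite row_mxEl !mxE => /twice0.
    by move=> /(_ h2) /eqP; rewrite (negbTE hxk).
  have hdc : (d_b b (pm_code C1 C2) <= w_b b c0)%N by apply: bigminn_le; rewrite hc0 c0nz.
  have ht0m : (1 <= t0 <= minn h (n - 1))%N by have := ltn_ord t0; move: ht0; rewrite /=; clear; lia.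
  have hy : ((a + t0) %% n = 0 \/ (a + t0) %% n = n.-1)%N.
    by rewrite -et0; case/orP: hi0v => /eqP ->; [left|right].
  have := dbl_le hb1 hbn' (ltn_ord a) hm1 (geq_minr h (n - 1)) ht0m hy hz hcx.
  rewrite wx; clear -hdc; lia.
have dC : d_b b (pm_code C1 C2) = b.+1 by apply/eqP; rewrite eqn_leq Ub Lb.
split; first exact: hdim.
split => //.
rewrite /bsym_AMDS dC hdim.
have -> : (n + n - (2 * n - 2) + b = b.+2)%N by clear -hbn hn3; lia.
rewrite (minn_idPl _) //; clear -hbn hn3; lia.
Qed.
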